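(* Suppose the current syndrome satisfies $\emptyset\ne\sigma\subseteq\{v_1\}\times C_2$ for a fixed $v_1\in V_1$. Let $(c_1,v_2)\in C_1\times V_2$ be a $Z$-type generator whose local view meets the syndrome, $(\Gamma(c_1)\times\Gamma(v_2))\cap\sigma\neq\emptyset$, and let $F\subseteq\mathrm{supp}(c_1,v_2)$ be non-empty with $F\cap(\{v_1\}\times V_2)=\emptyset$. Then $F$ is not flipped by Small-Set-Flip: whenever $\max_{F'\in\mathcal F}\mathrm{score}(F')>0$, one has $\mathrm{score}(F)<\max_{F'\in\mathcal F}\mathrm{score}(F')$.
   Context: Let $G=(V\cup C,E)$ be a connected $(\Delta_V,\Delta_C)$-biregular bipartite graph with $\Delta_V,\Delta_C\ge 2$, $\Gamma(x)$ the neighbourhood of a vertex $x$, and $G_1=(V_1\cup C_1,E_1)$, $G_2=(V_2\cup C_2,E_2)$ two copies of $G$. The hypergraph product code has qubits $Q=V_1\times V_2\sqcup C_1\times C_2$; $X$-type checks indexed by $V_1\times C_2$, check $(v,c)$ acting on $\{v\}\times\Gamma(c)\sqcup\Gamma(v)\times\{c\}$; $Z$-type generators indexed by $C_1\times V_2$, generator $(c,v)$ with support $\mathrm{supp}(c,v)=\Gamma(c)\times\{v\}\sqcup\{c\}\times\Gamma(v)$. The local view of $(c,v)$ is $\Gamma(c)\times\Gamma(v)$. For $F\subseteq Q$, $\sigma(F)$ is the set of checks acting on an odd number of qubits of $F$; $\sigma$ is the current set of unsatisfied checks. $\mathcal F=\{F: F\subseteq\mathrm{supp}(c,v)\text{ for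 some }(c,v)\in C_1\times V_2\}$. For $F\ne\emptyset$, $\mathrm{score}(F)=(|\sigma|-|\sigma\triangle\sigma(F)|)/|F|$, and $\mathrm{score}(\emptyset)=0$. Small-Set-Flip in each iteration flips a set of $\mathcal F$ of maximum score, provided that maximum is positive. *)

(* Defs.v *)
From mathcomp Require Import all_boot all_order all_algebra.
Set Implicit Arguments. Unset Strict Implicit. Unset Printing Implicit Defensive.
Import Order.TTheory GRing.Theory Num.Theory.

(* A bipartite graph G = (V ∪ C, E) is given by adj : V -> C -> bool,
   adj v c <=> {v,c} ∈ E.  Gamma(v) = [set c | adj v c], Gamma(c) = [set v | adj v c].
   Both copies G1, G2 are the same graph, so V1 = V2 = V and C1 = C2 = C. *)

Section HGP.
Variables (V C : finType) (adj : V -> C -> bool).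

Definition nbV (v : V) : {set C} := [set c | adj v c].
Definition nbC (c : C) : {set V} := [set v | adj v c].

Definition biregular (dV dC : nat) : Prop :=
  (forall v, #|nbV v| = dV) /\ (forall c, #|nbC c| = dC).

Definition brel : rel (V + C) := fun x y =>
  match x, y with
  | inl v, inr c => adj v c
  | inr c, inl v => adj v c
  | _, _ => false
  end.
Definition bconnected : Prop := forall x y : V + C, connect brel x y.

(* qubits Q = V1 x V2 ⊔ C1 x C2 ; X-checks V1 x C2 ; Z-generators C1 x V2 *)
Definition qubit := ((V * V) + (C * C))%type.
Definition xcheck := (V * C)%type.
Definition zgen := (C * V)%type.

Definition acts (x : xcheck) (q : qubit) : bool :=
  match q with
  | inl (a, b) => (a == x.1) && adj b x.2
  | inr (a, b) => (b == x.2) && adj x.1 a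
  end.

Definition zsupp (z : zgen) : {set qubit} :=
  [set q | match q with
           | inl (a, b) => adj a z.1 && (b == z.2)
           | inr (a, b) => (a == z.1) && adj z.2 b
           end].

Definition localview (z : zgen) : {set xcheck} :=
  [set x | adj x.1 z.1 && adj z.2 x.2].

Definition synd (F : {set qubit}) : {set xcheck} :=
  [set x | odd #|[set q in F | acts x q]|].

Definition inFamily (F : {set qubit}) : bool := [exists z, F \subset zsupp z].

Definition symdiff (A B : {set xcheck}) : {set xcheck} := (A :\: B) :|: (B :\: A).

Definition score (sigma : {set xcheck}) (F : {set qubit}) : rat :=
  if F == set0 then 0%R
  else ((#|sigma|%:Q - #|symdiff sigma (synd F)|%:Q) / #|F|%:Q)%R.

(* max over the (finite, nonempty: contains set0) family of score *)
Definition maxscore (sigma : {set xcheck}) : rat :=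
  \big[Num.max/0%R]_(F : {set qubit} | inFamily F) score sigma F.

End HGP.

(* Main.v *)
Require Import Defs.
From mathcomp Require Import all_boot all_order all_algebra.
From mathcomp Require Import zify ring lra.
Import Order.TTheory GRing.Theory Num.Theory.

Lemma acts_in (V C : finType) (adj : V -> C -> bool) c1 v2 (F : {set qubit V C}) x y q :
  F \subset zsupp adj (c1, v2) ->
  (q \in F) && acts adj (x, y) q =
  ((q == inl (x, v2)) && ((inl (x, v2) \in F) && adj v2 y)) ||
  ((q == inr (c1, y)) && ((inr (c1, y) \in F) && adj x c1)).
Proof.
move=> sF; case: q => [[a b]|[a b]] /=; rewrite ?orbF ?orFb.
- case qF: (inl (a, b) \in F) => /=; last first.
    by apply/esym/negP => /and3P[/eqP e h _]; move: h; rewrite -e qF.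
  have := subsetP sF _ qF; rewrite inE /= => /andP[_ /eqP eb]; subst b.
  case: (eqVneq a x) => [<-|ne] /=.
    by rewrite eqxx qF.
  apply/esym/negP => /and3P[/eqP [] e _ _]; by rewrite e eqxx in ne.
- case qF: (inr (a, b) \in F) => /=; last first.
    by apply/esym/negP => /and3P[/eqP e h _]; move: h; rewrite -e qF.
  have := subsetP sF _ qF; rewrite inE /= => /andP[/eqP ea _]; subst a.
  case: (eqVneq b y) => [<-|ne] /=.
    by rewrite eqxx qF.
  apply/esym/negP => /and3P[/eqP [] e _ _]; by rewrite e eqxx in ne.
Qed.

Lemma synd_mem (V C : finType) (adj : V -> C -> bool) c1 v2 (F : {set qubit V C}) x y :
  F \subset zsupp adj (c1, v2) ->
  ((x, y) \in synd adj F) =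
  ((inl (x, v2) \in F) && adj v2 y) (+) ((inr (c1, y) \in F) && adj x c1).
Proof.
move=> sF; rewrite inE.
have -> : [set q in F | acts adj (x, y) q] =
  [set q | ((q == inl (x, v2)) && ((inl (x, v2) \in F) && adj v2 y)) ||
           ((q == inr (c1, y)) && ((inr (c1, y) \in F) && adj x c1))].
  by apply/setP => q; rewrite !inE (@acts_in _ _ _ _ _ _ x y q sF).
case: ((inl (x, v2) \in F) && adj v2 y); case: ((inr (c1, y) \in F) && adj x c1) => /=.
- rewrite (_ : [set q | _] = [set inl (x, v2); inr (c1, y)]) ?cards2 //.
  by apply/setP => q; rewrite !inE ?andbT ?orbF.
- rewrite (_ : [set q | _] = [set inl (x, v2)]) ?cards1 //.
  by apply/setP => q; rewrite !inE ?andbT ?andbF ?orbF.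
- rewrite (_ : [set q | _] = [set inr (c1, y)]) ?cards1 //.
  by apply/setP => q; rewrite !inE ?andbT ?andbF ?orbF.
- rewrite (_ : [set q | _] = set0) ?cards0 //.
  by apply/setP => q; rewrite !inE ?andbT ?andbF ?orbF.
Qed.

Arguments synd_mem {V C adj c1 v2 F} x y.

Lemma card_symdiff (V C : finType) (A B : {set xcheck V C}) :
  #|symdiff A B| + 2 * #|A :&: B| = #|A| + #|B|.
Proof.
rewrite /symdiff.
have := cardsUI (A :\: B) (B :\: A).
have -> : (A :\: B) :&: (B :\: A) = set0.
  by apply/setP => q; rewrite !inE; case: (q \in A); case: (q \in B).
have := cardsID B A; have := cardsID A B; rewrite setIC cards0; lia.
Qed.

Theorem claim2 (V C : finType) (adj : V -> C -> bool) (dV dC : nat) :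
  (2 <= dV)%N -> (2 <= dC)%N ->
  biregular adj dV dC -> bconnected adj ->
  forall (sigma : {set xcheck V C}) (v1 : V),
  sigma != set0 ->
  (forall x, x \in sigma -> x.1 = v1) ->
  forall (c1 : C) (v2 : V) (F : {set qubit V C}),
  localview adj (c1, v2) :&: sigma != set0 ->
  F \subset zsupp adj (c1, v2) ->
  F != set0 ->
  (forall v : V, inl (v1, v) \notin F) ->
  (0 < maxscore adj sigma)%R ->
  (score adj sigma F < maxscore adj sigma)%R.
Proof.
move=> _ hdC [hV hC] _ sigma v1 _ hsig c1 v2 F hlv sF hFne hF hmax.
have hv1 : adj v1 c1.
  case/set0Pn: hlv => [[x y]]; rewrite !inE /= => /andP[/andP[hx _] hs].
  by have /= ex := hsig _ hs; rewrite ex in hx.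
pose F0 : {set qubit V C} := [set inl (v1, v2)].
have sF0 : F0 \subset zsupp adj (c1, v2).
  by apply/subsetP => q; rewrite inE => /eqP ->; rewrite inE /= hv1 eqxx.
pose S := synd adj F; pose S0 := synd adj F0.
pose B := [set y | inr (c1, y) \in F].
have hS0 : #|S0| = dV.
  rewrite -(hV v2) -[#|nbV _ _|]mul1n -(cards1 v1) -cardsX.
  apply: eq_card => -[x y]; rewrite /S0 in_setX (synd_mem x y sF0) !inE /= addbF.
  case: (eqVneq x v1) => [->|ne]; first by rewrite eqxx.
  by case: eqP => // -[] e; rewrite e eqxx in ne.
have hkt : #|sigma :&: S| <= #|sigma :&: S0|.
  apply: subset_leq_card; apply/subsetP => -[x y]; rewrite !in_setI => /andP[hs].
  have /= ex := hsig _ hs; subst x.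
  rewrite /S (synd_mem v1 y sF) /S0 (synd_mem v1 y sF0) (negbTE (hF v2)) /= hs /=.
  rewrite !inE eqxx /= addbF => /andP[hy _].
  by have := subsetP sF _ hy; rewrite inE /= => /andP[_ ->].
have hkb : #|sigma :&: S| <= #|B|.
  rewrite -[#|B|]mul1n -(cards1 v1) -cardsX.
  apply: subset_leq_card; apply/subsetP => -[x y]; rewrite !in_setI => /andP[hs].
  have /= ex := hsig _ hs; subst x.
  rewrite /S (synd_mem v1 y sF) (negbTE (hF v2)) /= => /andP[hy _].
  by rewrite in_setX !inE eqxx hy.
have hcase : (dV <= #|S| /\ (0 < #|B| -> 2 <= #|F|)) \/ (2 * #|B| <= #|S|).
  case: (boolP [exists a, inl (a, v2) \in F]) => [/existsP[a0 ha0] | /existsPn hno].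
  - left.
    have na0 : a0 != v1 by apply/eqP => e; subst a0; move: (hF v2); rewrite ha0.
    have ha0c : adj a0 c1 by have := subsetP sF _ ha0; rewrite inE /= => /andP[].
    split.
      pose f := fun y => if y \in B then (v1, y) else (a0, y).
      have finj : injective f.
        by move=> y y' /(congr1 snd); rewrite /f; case: (y \in B); case: (y' \in B).
      rewrite -(hV v2) -(card_imset (nbV adj v2) finj).
      apply: subset_leq_card; apply/subsetP => p /imsetP[y]; rewrite inE => hy ->.
      rewrite /f; case: ifP; rewrite inE => hyB.
        by rewrite /S (synd_mem v1 y sF) (negbTE (hF v2)) hyB hv1.
      by rewrite /S (synd_mem a0 y sF) ha0 hyB hy.
    case/card_gt0P => y0; rewrite inE => hy0.
    have <- : #|[set inl (a0, v2); inr (c1, y0)] : {set qubit V C}| = 2 by rewrite cards2.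
    apply: subset_leq_card; apply/subsetP => q; rewrite !inE => /orP[] /eqP -> //.
  - right.
    apply: (leq_trans (leq_mul hdC (leqnn #|B|))); rewrite -(hC c1) -cardsX.
    apply: subset_leq_card; apply/subsetP => -[x y]; rewrite in_setX => /andP[hx hy]; rewrite inE in hx; rewrite inE in hy.
    by rewrite /S (synd_mem x y sF) (negbTE (hno x)) hy hx.
have hsd := @card_symdiff _ _ sigma S.
have hsd0 := @card_symdiff _ _ sigma S0.
have hF0in : inFamily adj F0 by apply/existsP; exists (c1, v2).
have hmax0 : (score adj sigma F0 <= maxscore adj sigma)%R.
  by rewrite /maxscore (bigD1 F0) //= le_max lexx.
have hsc0 : score adj sigma F0 = (#|sigma|%:Q - #|symdiff sigma S0|%:Q)%R.
  rewrite /score (_ : (F0 == set0) = false) ?cards1 ?divr1 //.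
  by apply/negbTE/set0Pn; exists (inl (v1, v2)); rewrite inE.
have hscF : score adj sigma F = ((#|sigma|%:Q - #|symdiff sigma S|%:Q) / #|F|%:Q)%R.
  by rewrite /score (negbTE hFne).
have hf0 : 0 < #|F| by rewrite card_gt0.
case: (ltnP #|symdiff sigma S| #|sigma|) => hds.
- apply: (lt_le_trans _ hmax0); rewrite hscF hsc0 ltr_pdivrMr ?ltr0n //.
  have hd0 : #|symdiff sigma S0| <= #|symdiff sigma S| by case: hcase => [[h1 h2]|h]; lia.
  rewrite -!natrB; [|lia|lia]; rewrite -natrM ltr_nat.
  have hf2 : 2 <= #|F| by case: hcase => [[h1 h2]|h]; [apply: h2|]; lia.
  apply: (leq_trans _ (leq_mul (leqnn _) hf2)); lia.
- apply: (le_lt_trans _ hmax); rewrite hscF ler_pdivrMr ?ltr0n // mul0r subr_le0 ler_nat //.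
Qed.
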